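(* Let $0<d_{\min}<d_{\max}$, $N\ge 3$, $T_{\rm s}>0$. For $R_1,\dots,R_N\in[d_{\min},d_{\max}]$ and $\theta_1,\dots,\theta_N\in[0,2\pi)$ with $\sum_{j<k}\sin^2(\theta_j-\theta_k)>0$, let $$S(R,\theta)=\frac{\sum_{k=1}^N R_k^{-2}}{T_{\rm s}\sum_{j<k} R_j^{-2}R_k^{-2}\sin^2(\theta_j-\theta_k)}.$$ Then $S(R,\theta)\ge \frac{4d_{\min}^2}{NT_{\rm s}}$ for all such $(R,\theta)$, and equality holds when $R_1=\dots=R_N=d_{\min}$ and $\theta_k=2\pi k/N$, $k=1,\dots,N$ (anchors at the vertices of a regular $N$-gon inscribed in the circle of radius $d_{\min}$). In particular, the minimum of $S$ over this set, and also the minimum of the GDOP $G(R,\theta)=\frac{NR^2}{T_{\rm s}\sum_{j<k}\sin^2(\theta_j-\theta_k)}$ over $R\in[d_{\min},d_{\max}]$ and such $\theta$, both equal $4d_{\min}^2/(NT_{\rm s})$.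
   Context: $S$ is the squared position error bound for anchors at polar positions $(R_k,\theta_k)$ relative to the target at the origin; $T_{\rm s}>0$ is a fixed constant. *)

(* Defs.v *)
From Stdlib Require Import Reals Lra Lia.
Open Scope R_scope.

Fixpoint rsum (n : nat) (f : nat -> R) : R :=
  match n with
  | O => 0
  | S m => rsum m f + f m
  end.

Definition pairsum (n : nat) (g : nat -> nat -> R) : R :=
  rsum n (fun k => rsum k (fun j => g j k)).

(* anchors indexed 0..N-1 (paper: 1..N) *)
Definition sin2sum (N : nat) (th : nat -> R) : R :=
  pairsum N (fun j k => (sin (th j - th k)) ^ 2).

Definition S_bound (N : nat) (Ts : R) (Rr th : nat -> R) : R :=
  rsum N (fun k => / (Rr k ^ 2)) /
  (Ts * pairsum N (fun j k => / (Rr j ^ 2) * / (Rr k ^ 2) * (sin (th j - th k)) ^ 2)).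

Definition GDOP (N : nat) (Ts : R) (r : R) (th : nat -> R) : R :=
  INR N * r ^ 2 / (Ts * sin2sum N th).

Definition admissible_angles (N : nat) (th : nat -> R) : Prop :=
  (forall k, (k < N)%nat -> 0 <= th k < 2 * PI) /\ 0 < sin2sum N th.

Definition admissible_radii (N : nat) (dmin dmax : R) (Rr : nat -> R) : Prop :=
  forall k, (k < N)%nat -> dmin <= Rr k <= dmax.

Definition reg_angles (N : nat) : nat -> R := fun k => 2 * PI * INR k / INR N.

(* Main.v *)
Require Import Defs.
From Stdlib Require Import Reals Lra Lia.
Open Scope R_scope.

Lemma rsum_S n f : rsum (S n) f = rsum n f + f n.
Proof. reflexivity. Qed.

Lemma rsum_ext n f g : (forall k, (k < n)%nat -> f k = g k) -> rsum n f = rsum n g.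
Proof. induction n; intros H; simpl; auto. rewrite IHn; [rewrite H|]; auto; intros; apply H; lia. Qed.

Lemma rsum_le n f g : (forall k, (k < n)%nat -> f k <= g k) -> rsum n f <= rsum n g.
Proof. induction n; intros H; simpl; [lra|]. assert (rsum n f <= rsum n g) by (apply IHn; intros; apply H; lia).
 assert (f n <= g n) by (apply H; lia). lra. Qed.

Lemma rsum_scal n c f : rsum n (fun k => c * f k) = c * rsum n f.
Proof. induction n; simpl; [ring|]. rewrite IHn; ring. Qed.

Lemma rsum_const n c : rsum n (fun _ => c) = INR n * c.
Proof. induction n; simpl rsum; [simpl; ring|]. rewrite IHn, S_INR; ring. Qed.

Definition Aw (w th : nat -> R) n := rsum n (fun k => w k * cos (th k) ^ 2).
Definition Cw (w th : nat -> R) n := rsum n (fun k => w k * sin (th k) ^ 2).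
Definition Bw (w th : nat -> R) n := rsum n (fun k => w k * (cos (th k) * sin (th k))).

Lemma inner_sum w th n m :
  rsum m (fun j => w j * w n * sin (th j - th n) ^ 2) =
  w n * (cos (th n) ^ 2 * Cw w th m + sin (th n) ^ 2 * Aw w th m
         - 2 * cos (th n) * sin (th n) * Bw w th m).
Proof. unfold Aw, Bw, Cw. induction m; [simpl; ring|]. rewrite !rsum_S, IHm, sin_minus. ring. Qed.

Lemma pairsum_det w th n :
  pairsum n (fun j k => w j * w k * sin (th j - th k) ^ 2) =
  Aw w th n * Cw w th n - Bw w th n ^ 2.
Proof. induction n; [unfold pairsum, Aw, Bw, Cw; simpl; ring|].
 unfold pairsum in *. rewrite rsum_S, IHn, inner_sum. unfold Aw, Bw, Cw. rewrite !rsum_S. ring. Qed.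

Lemma sc1 x : sin x ^ 2 + cos x ^ 2 = 1.
Proof. pose proof (sin2_cos2 x). unfold Rsqr in H. lra. Qed.

Lemma AplusC w th n : Aw w th n + Cw w th n = rsum n w.
Proof. unfold Aw, Cw. induction n; [simpl; ring|]; rewrite !rsum_S.
 pose proof (sc1 (th n)). replace (cos (th n) ^2) with (1 - sin (th n)^2) by lra. nra. Qed.

Lemma AminusC w th n : Aw w th n - Cw w th n = rsum n (fun k => w k * cos (2 * th k)).
Proof. unfold Aw, Cw. induction n; [simpl; ring|]; rewrite !rsum_S. rewrite <- IHn, cos_2a. ring. Qed.

Lemma twoB w th n : 2 * Bw w th n = rsum n (fun k => w k * sin (2 * th k)).
Proof. unfold Bw. induction n; [simpl; ring|]; rewrite !rsum_S. rewrite <- IHn, sin_2a. ring. Qed.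

Lemma det_le w th n : Aw w th n * Cw w th n - Bw w th n ^ 2 <= (rsum n w) ^ 2 / 4.
Proof. rewrite <- (AplusC w th n). set (a := Aw w th n); set (c := Cw w th n); set (e := Bw w th n). assert (0 <= (a - c)^2 + 4 * e^2) by (pose proof (pow2_ge_0 (a-c)); pose proof (pow2_ge_0 e); lra). assert ((a+c)^2/4 - (a*c - e^2) = ((a-c)^2 + 4*e^2)/4) by field. lra. Qed.

Lemma tele_cos b m : 2 * sin b * rsum m (fun k => cos (2 * INR k * b)) =
  sin ((2 * INR m - 1) * b) + sin b.
Proof. induction m; simpl rsum.
 - simpl INR. replace ((2*0-1)*b) with (-b) by ring. rewrite sin_neg. ring.
 - rewrite Rmult_plus_distr_l, IHm, S_INR.
   replace ((2 * (INR m + 1) - 1) * b) with (2*INR m*b + b) by ring.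
   replace ((2 * INR m - 1) * b) with (2*INR m*b - b) by ring.
   rewrite sin_plus, sin_minus. ring. Qed.

Lemma tele_sin b m : 2 * sin b * rsum m (fun k => sin (2 * INR k * b)) =
  cos b - cos ((2 * INR m - 1) * b).
Proof. induction m; simpl rsum.
 - simpl INR. replace ((2*0-1)*b) with (-b) by ring. rewrite cos_neg. ring.
 - rewrite Rmult_plus_distr_l, IHm, S_INR.
   replace ((2 * (INR m + 1) - 1) * b) with (2*INR m*b + b) by ring.
   replace ((2 * INR m - 1) * b) with (2*INR m*b - b) by ring.
   rewrite cos_plus, cos_minus. ring. Qed.

Lemma reg_facts N : (3 <= N)%nat ->
  rsum N (fun k => cos (2 * reg_angles N k)) = 0 /\
  rsum N (fun k => sin (2 * reg_angles N k)) = 0.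
Proof. intros HN.
 assert (HNr : 3 <= INR N) by (replace 3 with (INR 3) by (simpl; ring); apply le_INR; lia).
 set (b := 2 * PI / INR N).
 assert (Hb : forall k, 2 * reg_angles N k = 2 * INR k * b).
 { intros; unfold reg_angles, b; field; lra. }
 assert (Hend : (2 * INR N - 1) * b = - b + 2 * INR 2 * PI).
 { unfold b. simpl INR. field. lra. }
 pose proof PI_RGT_0.
 assert (Hsb : 0 < sin b).
 { apply sin_gt_0; unfold b.
   - apply Rdiv_lt_0_compat; lra.
   - apply (Rmult_lt_reg_r (INR N)); [lra|]. field_simplify; nra. }
 split.
 - rewrite (rsum_ext _ _ (fun k => cos (2 * INR k * b))) by (intros; rewrite Hb; auto).
   pose proof (tele_cos b N). rewrite Hend, sin_period, sin_neg in H0.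
   assert (2 * sin b <> 0) by lra. apply (Rmult_eq_reg_l (2 * sin b)); lra.
 - rewrite (rsum_ext _ _ (fun k => sin (2 * INR k * b))) by (intros; rewrite Hb; auto).
   pose proof (tele_sin b N). rewrite Hend, cos_period, cos_neg in H0.
   assert (2 * sin b <> 0) by lra. apply (Rmult_eq_reg_l (2 * sin b)); lra.
Qed.

Lemma reg_det c N : (3 <= N)%nat ->
  pairsum N (fun j k => c * c * sin (reg_angles N j - reg_angles N k) ^ 2) =
  INR N ^ 2 * c ^ 2 / 4.
Proof. intros HN. pose proof (pairsum_det (fun _ => c) (reg_angles N) N) as H. cbv beta in H.
 rewrite H. destruct (reg_facts N HN) as [H1 H2].
 pose proof (AminusC (fun _ => c) (reg_angles N) N) as E1. cbv beta in E1.
 rewrite rsum_scal, H1 in E1.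
 pose proof (twoB (fun _ => c) (reg_angles N) N) as E2. cbv beta in E2.
 rewrite rsum_scal, H2 in E2.
 pose proof (AplusC (fun _ => c) (reg_angles N) N) as E3. rewrite rsum_const in E3.
 assert (Cw (fun _ => c) (reg_angles N) N = INR N * c / 2) by lra.
 assert (Aw (fun _ => c) (reg_angles N) N = INR N * c / 2) by lra.
 assert (Bw (fun _ => c) (reg_angles N) N = 0) by lra.
 rewrite H0, H3, H4. field. Qed.

Lemma div_le a b c d : 0 < b -> 0 < d -> a * d <= c * b -> a / b <= c / d.
Proof. intros. replace (a/b) with ((a*d)*/(b*d)) by (field; lra).
 replace (c/d) with ((c*b)*/(b*d)) by (field; lra).
 apply Rmult_le_compat_r; [left; apply Rinv_0_lt_compat; nra | auto]. Qed.

Lemma pairsum_le n g h : (forall j k, (j < k)%nat -> (k < n)%nat -> g j k <= h j k) ->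
  pairsum n g <= pairsum n h.
Proof. intros H. unfold pairsum. apply rsum_le. intros k Hk. apply rsum_le. intros j Hj. apply H; auto. Qed.

Lemma sin2sum_eq N th : sin2sum N th = pairsum N (fun j k => 1 * 1 * sin (th j - th k) ^ 2).
Proof. unfold sin2sum, pairsum. apply rsum_ext; intros; apply rsum_ext; intros; ring. Qed.

Lemma sin2_le N th : sin2sum N th <= INR N ^ 2 / 4.
Proof. rewrite sin2sum_eq. pose proof (pairsum_det (fun _ => 1) th N) as H. cbv beta in H.
 rewrite H. pose proof (det_le (fun _ => 1) th N). rewrite rsum_const in H0. lra. Qed.

Lemma reg_sin2 N : (3 <= N)%nat -> sin2sum N (reg_angles N) = INR N ^ 2 / 4.
Proof. intros. rewrite sin2sum_eq, reg_det; auto. field. Qed.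

Theorem mainTheorem7 (dmin dmax Ts : R) (N : nat)
  (hd : 0 < dmin) (hdd : dmin < dmax) (hN : (3 <= N)%nat) (hT : 0 < Ts) :
  (* lower bound for S *)
  (forall Rr th : nat -> R,
     admissible_radii N dmin dmax Rr -> admissible_angles N th ->
     S_bound N Ts Rr th >= 4 * dmin ^ 2 / (INR N * Ts)) /\
  (* the regular N-gon of radius dmin is admissible and attains it *)
  admissible_radii N dmin dmax (fun _ => dmin) /\
  admissible_angles N (reg_angles N) /\
  S_bound N Ts (fun _ => dmin) (reg_angles N) = 4 * dmin ^ 2 / (INR N * Ts) /\
  (* same minimum for the GDOP *)
  (forall (r : R) (th : nat -> R),
     dmin <= r <= dmax -> admissible_angles N th ->
     GDOP N Ts r th >= 4 * dmin ^ 2 / (INR N * Ts)) /\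
  GDOP N Ts dmin (reg_angles N) = 4 * dmin ^ 2 / (INR N * Ts).
Proof.
  assert (HNr : 3 <= INR N) by (replace 3 with (INR 3) by (simpl; ring); apply le_INR; lia).
  pose proof PI_RGT_0 as HPI.
  split; [|split; [|split; [|split; [|split]]]].
  - intros Rr th HR [_ Hs]. unfold S_bound.
    set (w := fun k => / (Rr k ^ 2)).
    assert (Hw : forall k, (k < N)%nat -> / (dmax ^ 2) <= w k <= / (dmin ^ 2)).
    { intros k Hk. destruct (HR k Hk). unfold w. split; apply Rinv_le_contravar; nra. }
    pose proof (pairsum_det w th N) as HD.
    replace (pairsum N (fun j k => / (Rr j ^ 2) * / (Rr k ^ 2) * sin (th j - th k) ^ 2)) with (Aw w th N * Cw w th N - Bw w th N ^ 2) by (rewrite <- HD; reflexivity). pose proof (det_le w th N) as Hle.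
    set (D := Aw w th N * Cw w th N - Bw w th N ^ 2) in *.
    set (sw := rsum N w) in *.
    assert (Hm : 0 < / (dmax ^ 2)) by (apply Rinv_0_lt_compat; nra).
    assert (HDpos : / (dmax^2) * / (dmax^2) * sin2sum N th <= D).
    { rewrite <- HD. unfold sin2sum, pairsum.
      rewrite <- rsum_scal. apply rsum_le. intros k Hk. rewrite <- rsum_scal.
      apply rsum_le. intros j Hj. destruct (Hw j ltac:(lia)), (Hw k Hk).
      pose proof (pow2_ge_0 (sin (th j - th k))).
      assert (/ (dmax^2) * / (dmax^2) <= / (Rr j ^ 2) * / (Rr k ^ 2)).
      { unfold w in *. apply Rmult_le_compat; lra. }
      unfold w in *; cbv beta; apply Rmult_le_compat_r; lra. }
    assert (HD0 : 0 < D) by (assert (0 < / (dmax^2) * / (dmax^2) * sin2sum N th) by (repeat apply Rmult_lt_0_compat; auto); lra).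
    assert (Hsw : sw <= INR N * / (dmin ^ 2)).
    { unfold sw. rewrite <- rsum_const. apply rsum_le. intros; apply Hw; auto. }
    assert (Hsw0 : 0 <= sw).
    { unfold sw. replace 0 with (INR N * 0) by ring. rewrite <- rsum_const. apply rsum_le.
      intros k Hk; destruct (Hw k Hk); lra. }
    assert (Hsw2 : sw * dmin ^ 2 <= INR N).
    { replace (INR N) with (INR N * / (dmin^2) * dmin ^2) by (field; lra).
      apply Rmult_le_compat_r; nra. }
    apply Rle_ge. apply div_le; [nra|nra|].
    assert (4 * D <= sw ^ 2) by lra.
    assert (4 * dmin^2 * (Ts * D) <= Ts * dmin^2 * sw ^ 2).
    { replace (4 * dmin^2 * (Ts * D)) with (Ts * dmin^2 * (4 * D)) by ring.
      apply Rmult_le_compat_l; nra. }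
    assert (Ts * dmin^2 * sw^2 = Ts * sw * (sw * dmin^2)) by ring.
    assert (Ts * sw * (sw * dmin^2) <= Ts * sw * INR N) by (apply Rmult_le_compat_l; nra).
    nra.
  - intros k _. lra.
  - split.
    + intros k Hk. unfold reg_angles.
      assert (INR k < INR N) by (apply lt_INR; auto).
      pose proof (pos_INR k).
      assert (0 < / INR N) by (apply Rinv_0_lt_compat; lra).
      assert (INR N * / INR N = 1) by (field; lra).
      unfold Rdiv. split; [apply Rmult_le_pos; [apply Rmult_le_pos|]; lra|].
      assert (0 < 2 * PI * (/ INR N * (INR N - INR k))) by (apply Rmult_lt_0_compat; [lra|apply Rmult_lt_0_compat; lra]).
      assert (2 * PI - 2 * PI * INR k * / INR N = 2 * PI * (/ INR N * (INR N - INR k))) by (field; lra).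
      lra.
    + rewrite reg_sin2; auto. nra.
  - unfold S_bound. rewrite rsum_const. rewrite reg_det; auto.
    field; split; lra.
  - intros r th Hr [_ Hs]. unfold GDOP. pose proof (sin2_le N th).
    apply Rle_ge. apply div_le; [nra|nra|].
    assert (4 * sin2sum N th <= INR N ^ 2) by lra.
    assert (dmin ^ 2 <= r ^ 2) by nra.
    assert (4 * dmin ^ 2 * (Ts * sin2sum N th) <= Ts * dmin^2 * INR N ^ 2).
    { replace (4 * dmin ^ 2 * (Ts * sin2sum N th)) with (Ts * dmin^2 * (4 * sin2sum N th)) by ring.
      apply Rmult_le_compat_l; nra. }
    assert (Ts * dmin^2 * INR N ^2 <= Ts * r^2 * INR N ^ 2).
    { apply Rmult_le_compat_r; [nra|]. apply Rmult_le_compat_l; lra. }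
    nra.
  - unfold GDOP. rewrite reg_sin2; auto. field; split; lra.
Qed.
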